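(* For every tight Rabin GFG automaton, there exists an equivalent strongly tight Rabin GFG automaton over the same structure.
   Context: An automaton is $\mathcal{A}=\langle\Sigma,Q,Q_0,\delta,\alpha\rangle$ with structure $\langle\Sigma,Q,Q_0,\delta\rangle$ ($\delta:Q\times\Sigma\to2^Q$). In a Rabin automaton $\alpha$ is a set of pairs $\langle E,F\rangle$ of sets of states ($E$ the bad set, $F$ the good set); a set $S$ of states is accepting if for some pair $S\cap E=\emptyset$ and $S\cap F\neq\emptyset$; a run is accepting if its set of infinitely visited states is accepting. $\mathcal{A}$ is GFG if there is a strategy $g:\Sigma^*\to Q$ such that for every $w=a_1a_2\cdots$, $g(\epsilon),g(a_1),g(a_1a_2),\ldots$ is a run on $w$, accepting whenever $w\in L(\mathcal{A})$. Finite-state strategies are transducers $g=\langle\Sigma,Q,M,m_0,\rho,\tau\rangle$ (finite memories $M$, $\rho:M\times\Sigma\to M$ extended to words from $m_0$, $\tau:M\to Q$, $g(u)=\tau(\rho(u))$); $m$ is a memory of $q$ if $\tau(m)=q$. $\mathcal{A}_g=\langle\Sigma,M,m_0,\rho,\alpha_g\rangle$ where $\alpha_g$ replaces each set $F$ in $\alpha$ by $\{m\mid\tau(m)\in F\}$. A transition $\langle q,a,q'\rangle$ is used by $g$ if $q=g(u)$, $q'=g(ua)$ for some $u$. Paths are finite sequences of states joined by transitions, cycles are paths whose first and last elements coincide; for a set $P$ of paths, a combination is the union of the state sets of a nonempty subset of $P$. For memories $m\neq m'$ with $\tau(m)=\tau(m')$, $m$ is replaceable by $m'$ if the set of paths of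 $\mathcal{A}_g$ from $m'$ to $m$ is empty or all its combinations are accepting. $\mathcal{A}$ is tight w.r.t. a finite-state strategy $g$ witnessing GFGness if all transitions are used by $g$ and no memory is replaceable by a different memory of the same state; tight if tight w.r.t. some such $g$. For a state $q$, a path of $\mathcal{A}_g$ is $q$-exclusive accepting if its set of memories is accepting but that set minus the memories of $q$ is not accepting. A Rabin GFG automaton is strongly tight w.r.t. $g$ if it is tight w.r.t. $g$ and for every state $q$ appearing in some good set of $\alpha$ there is a $q$-exclusive accepting cycle in $\mathcal{A}_g$; strongly tight if so w.r.t. some $g$. Equivalent means same language; over the same structure means only the acceptance condition differs. *)

(* Defs.v *)
From mathcomp Require Import all_boot.
Unset Printing Implicit Defensive.

(* A Rabin condition is a
   list of pairs (E, F) (E bad, F good). *)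

Section Rabin.
Variable T : finType.

Definition rabin_accepting (alpha : seq ({set T} * {set T})) (S : T -> Prop) : Prop :=
  exists2 EF, EF \in alpha &
    (forall x, S x -> x \notin EF.1) /\ (exists x, S x /\ x \in EF.2).

Definition inf_set (r : nat -> T) : T -> Prop :=
  fun q => forall n, exists m, n <= m /\ r m = q.
End Rabin.
Arguments rabin_accepting {T}.
Arguments inf_set {T}.

Section Automaton.
Variables (Sigma Q : finType) (Q0 : {set Q}) (delta : Q -> Sigma -> {set Q}).

Definition is_run (w : nat -> Sigma) (r : nat -> Q) : Prop :=
  r 0 \in Q0 /\ forall n, r n.+1 \in delta (r n) (w n).

Definition accepting_run (alpha : seq ({set Q} * {set Q})) (r : nat -> Q) : Prop :=
  rabin_accepting alpha (inf_set r).

Definition accepts (alpha : seq ({set Q} * {set Q})) (w : nat -> Sigma) : Prop :=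
  exists r, is_run w r /\ accepting_run alpha r.

Definition prefix (w : nat -> Sigma) (n : nat) : seq Sigma := mkseq w n.

Definition gfg_strategy (alpha : seq ({set Q} * {set Q})) (g : seq Sigma -> Q) : Prop :=
  forall w, is_run w (fun n => g (prefix w n)) /\
    (accepts alpha w -> accepting_run alpha (fun n => g (prefix w n))).

Record transducer := Transducer {
  mem : finType;
  m0 : mem;
  rho : mem -> Sigma -> mem;
  tau : mem -> Q }.
Arguments m0 : clear implicits.
Arguments rho : clear implicits.
Arguments tau : clear implicits.

Definition strat (g : transducer) (u : seq Sigma) : Q :=
  tau g (foldl (rho g) (m0 g) u).

Definition used (g : transducer) (q : Q) (a : Sigma) (q' : Q) : Prop :=
  exists u, q = strat g u /\ q' = strat g (rcons u a).

Definition alpha_g (g : transducer) (alpha : seq ({set Q} * {set Q}))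
  : seq ({set mem g} * {set mem g}) :=
  map (fun EF : {set Q} * {set Q} =>
    ([set m | tau g m \in EF.1], [set m | tau g m \in EF.2])) alpha.

Definition medge (g : transducer) : rel (mem g) :=
  fun m m' => [exists a, rho g m a == m'].

Definition gpath (g : transducer) (p : seq (mem g)) : Prop :=
  if p is x :: s then path (medge g) x s else False.

Definition path_from_to (g : transducer) (m' m : mem g) (p : seq (mem g)) : Prop :=
  gpath g p /\ head m p = m' /\ last m' p = m.

Definition gcycle (g : transducer) (p : seq (mem g)) : Prop :=
  match p with
  | x :: s => path (medge g) x s /\ s <> [::] /\ last x s = x
  | [::] => False
  end.

Definition union_paths (g : transducer) (X : seq (mem g) -> Prop) : mem g -> Prop :=
  fun m => exists p, X p /\ m \in p.

Definition replaceable (alpha : seq ({set Q} * {set Q})) (g : transducer) (m m' : mem g) : Prop :=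
  m <> m' /\ tau g m = tau g m' /\
  ((forall p, ~ path_from_to g m' m p) \/
   (forall X : seq (mem g) -> Prop,
      (forall p, X p -> path_from_to g m' m p) -> (exists p, X p) ->
      rabin_accepting (alpha_g g alpha) (union_paths g X))).

Definition tight_wrt (alpha : seq ({set Q} * {set Q})) (g : transducer) : Prop :=
  gfg_strategy alpha (strat g) /\
  (forall q a q', q' \in delta q a -> used g q a q') /\
  (forall m m' : mem g, tau g m = tau g m' -> m <> m' -> ~ replaceable alpha g m m').

Definition tight (alpha : seq ({set Q} * {set Q})) : Prop :=
  exists g : transducer, tight_wrt alpha g.

Definition exclusive_accepting (alpha : seq ({set Q} * {set Q})) (g : transducer)
  (q : Q) (p : seq (mem g)) : Prop :=
  rabin_accepting (alpha_g g alpha) (fun m => m \in p) /\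
  ~ rabin_accepting (alpha_g g alpha) (fun m => m \in p /\ tau g m <> q).

Definition strongly_tight_wrt (alpha : seq ({set Q} * {set Q})) (g : transducer) : Prop :=
  tight_wrt alpha g /\
  (forall q, (exists2 EF, EF \in alpha & q \in EF.2) ->
     exists p, gcycle g p /\ exclusive_accepting alpha g q p).

Definition strongly_tight (alpha : seq ({set Q} * {set Q})) : Prop :=
  exists g : transducer, strongly_tight_wrt alpha g.
End Automaton.
Arguments accepts {Sigma Q}.
Arguments tight {Sigma Q}.
Arguments strongly_tight {Sigma Q}.

(* Main.v *)
Require Import Defs.
From mathcomp Require Import all_boot.
From mathcomp Require Import zify.
From Stdlib Require Import Classical.

Section Generic.
Variable T : finType.
Local Notation acc := (@rabin_accepting T).

Lemma acc_ext (a : seq ({set T} * {set T})) (S S' : T -> Prop) :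
  (forall x, S x <-> S' x) -> acc a S -> acc a S'.
Proof.
move=> H [EF HEF [HE [x [Sx Hx]]]]; exists EF => //; split.
  by move=> y /H; apply: HE.
by exists x; split => //; apply/H.
Qed.

Definition minus (S : T -> Prop) q := fun x => S x /\ x <> q.

Definition step q (a : seq ({set T} * {set T})) : seq ({set T} * {set T}) :=
  [seq (EF.1, EF.2 :\ q) | EF <- a] ++
  [seq (EFi.1 :|: (EFj.1 :\ q), EFj.2 :\ q) |
     EFi : {set T} * {set T} <- [seq x : {set T} * {set T} <- a | (q \notin x.1) && (q \in x.2)],
     EFj : {set T} * {set T} <- [seq y : {set T} * {set T} <- a | q \in y.1]].

Lemma step_sound q a S : acc (step q a) S -> acc a S.
Proof.
case=> EF; rewrite mem_cat => /orP [/mapP [[E F] EFin ->] |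
   /allpairsP [[[Ei Fi] [Ej Fj]] /= [Hi Hj ->]]] /= [HE [x [Sx Hx]]].
- exists (E,F) => //; split => //; exists x; split => //.
  by move: Hx; rewrite in_setD1 => /andP[].
- rewrite mem_filter /= in Hi; case/andP: Hi => /andP [qEi qFi] Hi.
  rewrite mem_filter /= in Hj; case/andP: Hj => qEj Hj.
  case: (classic (S q)) => Sq.
  + exists (Ei,Fi) => //=; split; last by exists q.
    by move=> y Sy; move: (HE y Sy); rewrite in_setU negb_or => /andP[].
  + exists (Ej,Fj) => //=; split.
    * move=> y Sy; move: (HE y Sy); rewrite in_setU negb_or in_setD1 => /andP[_].
      have ->: y != q by apply/eqP => E; subst.
      done.
    * by exists x; split=>//; move: Hx; rewrite in_setD1 => /andP[].
Qed.

Lemma step_complete q a S : acc a S -> acc a (minus S q) -> acc (step q a) S.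
Proof.
case=> [[Ei Fi]] Hi /= [HEi [y [Sy yFi]]].
case=> [[Ej Fj]] Hj /= [HEj [x [[Sx xq] xFj]]].
case qEj: (q \in Ej).
- case: (eqVneq y q) => [yq|yq].
  + subst y. exists (Ei :|: (Ej :\ q), Fj :\ q).
    * rewrite mem_cat; apply/orP; right. apply/allpairsP.
      exists ((Ei,Fi),(Ej,Fj)) => /=; split => //; rewrite mem_filter /=.
        by rewrite Hi yFi (HEi q Sy).
      by rewrite Hj qEj.
    * split => /=.
        move=> z Sz; rewrite in_setU in_setD1 negb_or (HEi z Sz) /=.
        case: (eqVneq z q) => //= zq.
        by apply: HEj; split => //; apply/eqP.
      by exists x; split => //; rewrite in_setD1 xFj andbT; apply/eqP.
  + exists (Ei, Fi :\ q).
      by rewrite mem_cat; apply/orP; left; apply: (map_f (fun EF : {set T} * {set T} => (EF.1, EF.2 :\ q)) Hi).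
    split => //=. by exists y; rewrite in_setD1 yq yFi.
- exists (Ej, Fj :\ q).
    by rewrite mem_cat; apply/orP; left; apply: (map_f (fun EF : {set T} * {set T} => (EF.1, EF.2 :\ q)) Hj).
  split => /=.
    move=> z Sz; case: (eqVneq z q) => [->|zq]; first by rewrite qEj.
    by apply: HEj; split => //; apply/eqP.
  by exists x; rewrite in_setD1 xFj andbT; split => //; apply/eqP.
Qed.

Definition goods (a : seq ({set T} * {set T})) := [set q : T | has (fun EF : {set T} * {set T} => q \in EF.2) a].

Lemma step_goods q a : q \in goods a -> #|goods (step q a)| < #|goods a|.
Proof.
move=> qg; apply: proper_card; apply/properP; split.
  apply/subsetP => z; rewrite !inE => /hasP [EF]; rewrite mem_cat =>
    /orP [/mapP[EF' H ->] | /allpairsP [[EFi EFj] [Hi Hj ->]]] /=;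
    rewrite in_setD1 => /andP [_ zF]; apply/hasP.
    by exists EF'.
  by exists EFj => //; move: Hj; rewrite mem_filter => /andP[].
exists q => //; rewrite inE; apply/hasPn => EF; rewrite mem_cat =>
    /orP [/mapP[EF' H ->] | /allpairsP [[EFi EFj] [Hi Hj ->]]] /=;
    by rewrite in_setD1 eqxx.
Qed.

Lemma eventually_inf (M : nat -> T) : exists N, forall n, N <= n -> inf_set M (M n).
Proof.
have H: forall m, exists N, forall n, N <= n -> M n = m -> inf_set M m.
  move=> m; case: (classic (inf_set M m)) => h; first by exists 0.
  apply not_all_ex_not in h; case: h => N hN.
  by exists N => n Nn Mn; exfalso; apply: hN; exists n.
have: forall s : seq T, exists N, forall m, m \in s -> forall n, N <= n -> M n = m -> inf_set M m.
  elim => [|x s [N HN]]; first by exists 0.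
  have [N' HN'] := H x; exists (maxn N N') => m; rewrite inE => /orP [/eqP -> | ms] n Hn.
    by apply: HN'; apply: leq_trans Hn; apply: leq_maxr.
  by apply: HN => //; apply: leq_trans Hn; apply: leq_maxl.
move=> /(_ (enum T)) [N HN]; exists N => n Hn.
by apply: (HN (M n) _ n Hn erefl); rewrite mem_enum.
Qed.

Lemma cover (M : nat -> T) (l : seq T) : (forall m, m \in l -> inf_set M m) ->
  forall t0, exists t', t0 <= t' /\ forall m, m \in l -> exists t, t0 <= t <= t' /\ M t = m.
Proof.
elim: l => [|x l IH] Hl t0; first by exists t0.
have [t1 [h1 h2]] := Hl x (mem_head _ _) t0.
have [t' [h3 h4]] := IH (fun m hm => Hl m (ltac:(by rewrite inE hm orbT))) t1.
exists t'; split; first exact: leq_trans h1 h3.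
move=> m; rewrite inE => /orP [/eqP -> | hm].
  by exists t1; rewrite h1 h3.
have [t [/andP[a b] c]] := h4 m hm; exists t; split => //.
by rewrite (leq_trans h1 a) b.
Qed.

Lemma inf_list (M : nat -> T) : exists l : seq T, forall m, m \in l <-> inf_set M m.
Proof.
have: forall s : seq T, exists l : seq T, forall m, m \in l <-> (m \in s /\ inf_set M m).
  elim => [|x s [l Hl]]; first by exists [::] => m; split; [|case].
  case: (classic (inf_set M x)) => hx.
    exists (x :: l) => m; rewrite !inE; split.
      by case/orP => [/eqP -> | /Hl [a b]]; rewrite ?eqxx ?a ?orbT.
    case=> /orP [/eqP -> | a] b; first by rewrite eqxx.
    by apply/orP; right; apply/Hl.
  exists l => m; split.
    by move=> /Hl [a b]; rewrite inE a orbT.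
  rewrite inE; case=> /orP [/eqP -> | a] b //.
  by apply/Hl.
move=> /(_ (enum T)) [l Hl]; exists l => m; split.
  by move=> /Hl [].
by move=> h; apply/Hl; rewrite mem_enum.
Qed.

Lemma path_iota (e : rel T) (M : nat -> T) : (forall n, e (M n) (M n.+1)) ->
  forall k n, path e (M n) [seq M i | i <- iota n.+1 k].
Proof.
move=> He; elim => [|k IH] n //=.
by rewrite He IH.
Qed.

Lemma last_iota k n : last n (iota n.+1 k) = n + k.
Proof.
elim: k n => [|k IH] n /=; first by rewrite addn0.
by rewrite IH addSnnS.
Qed.

Lemma inf_cycle (e : rel T) (M : nat -> T) : (forall n, e (M n) (M n.+1)) ->
  exists x s, [/\ path e x s, s <> [::], last x s = x &
     forall m, m \in x :: s <-> inf_set M m].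
Proof.
move=> He.
have [N HN] := eventually_inf M.
have [l Hl] := inf_list M.
have [t' [h1 h2]] := @cover M l (fun m hm => proj1 (Hl m) hm) N.
have [t'' [h3 h4]] := HN N (leqnn N) t'.+1.
set k := t'' - N.+1.
have ht : t'' = N.+1 + k by rewrite /k; lia.
exists (M N), [seq M i | i <- iota N.+1 k.+1]; split.
- exact: path_iota.
- by [].
- by rewrite last_map last_iota -addSnnS -ht.
- move=> m; have ->: M N :: [seq M i | i <- iota N.+1 k.+1] = [seq M i | i <- iota N k.+2] by [].
  split.
    by case/mapP => i; rewrite mem_iota => /andP [a _] ->; apply: HN.
  move=> /Hl /h2 [t [/andP [a b] <-]]; apply: map_f; rewrite mem_iota.
  apply/andP; split => //; lia.
Qed.

Lemma inf_img (U : finType) (f : T -> U) (M : nat -> T) q :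
  inf_set (fun n => f (M n)) q <-> exists m, inf_set M m /\ f m = q.
Proof.
split.
  move=> H; have [N HN] := eventually_inf M.
  have [n [hn <-]] := H N; exists (M n); split => //; exact: HN.
move=> [m [Hm <-]] n; have [n' [a b]] := Hm n; exists n'; split => //.
by rewrite b.
Qed.

End Generic.
Arguments step {T}.
Arguments goods {T}.
Arguments minus {T}.
Arguments acc_ext {T}.
Arguments step_sound {T}.
Arguments step_complete {T}.
Arguments step_goods {T}.
Arguments eventually_inf {T}.
Arguments inf_cycle {T}.
Arguments inf_img {T}.

Section Auto.
Variables (Sigma Q : finType) (Q0 : {set Q}) (delta : Q -> Sigma -> {set Q}).
Variable g : transducer Sigma Q.
Local Notation M := (Defs.mem Sigma Q g).
Local Notation tg := (tau Sigma Q g).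
Local Notation rg := (rho Sigma Q g).
Local Notation ag := (alpha_g Sigma Q g).
Local Notation acc := rabin_accepting.

Definition img (S : M -> Prop) : Q -> Prop := fun q => exists m, S m /\ tg m = q.

Lemma acc_img a S : acc (ag a) S <-> acc a (img S).
Proof.
split.
  case=> EF' /mapP [EF H ->] /= [HE [m [Sm Hm]]].
  exists EF => //; split.
    by move=> q [m' [Sm' <-]]; move: (HE m' Sm'); rewrite inE.
  by exists (tg m); split; [exists m | move: Hm; rewrite inE].
case=> EF H [HE [q [[m [Sm <-]] Hq]]].
exists ([set m | tg m \in EF.1], [set m | tg m \in EF.2]).
  exact: (map_f (fun EF : {set Q} * {set Q} =>
    ([set m | tg m \in EF.1], [set m | tg m \in EF.2])) H).
split => /=.
  by move=> m' Sm'; rewrite inE; apply: HE; exists m'.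
by exists m; rewrite inE.
Qed.

Definition RR (a a' : seq ({set Q} * {set Q})) :=
  (forall S : Q -> Prop, acc a' S -> acc a S) /\
  (forall p, gcycle Sigma Q g p -> acc (ag a) (fun m => m \in p) ->
      acc (ag a') (fun m => m \in p)).

Definition Excl (a' : seq ({set Q} * {set Q})) :=
  forall q, (exists2 EF, EF \in a' & q \in EF.2) ->
     exists p, gcycle Sigma Q g p /\ exclusive_accepting Sigma Q a' g q p.

Lemma step_exists a a' : ~ Excl a' -> RR a a' ->
  exists q, RR a (step q a') /\ #|goods (step q a')| < #|goods a'|.
Proof.
move=> hn [R1 R2].
have [q hq] := not_all_ex_not _ _ hn.
have [[EF HEF qF] hp] := imply_to_and _ _ hq.
exists q; split; last first.
  by apply: step_goods; rewrite inE; apply/hasP; exists EF.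
split.
  by move=> S H; apply: R1; apply: step_sound H.
move=> p gp H.
have h1 := R2 p gp H.
have h2 : acc (ag a') (fun m => m \in p /\ tg m <> q).
  apply: NNPP => h; apply: hp; exists p; split => //; split => //.
apply/acc_img; apply: step_complete; first by apply/acc_img.
apply: acc_ext (proj1 (acc_img _ _) h2) => x; split.
  by case=> m [[mp mq] <-]; split => //; exists m.
by case=> [[m [mp <-]] mq]; exists m.
Qed.

Lemma exist_excl a : forall n a', #|goods a'| <= n -> RR a a' ->
  exists a'', RR a a'' /\ Excl a''.
Proof.
elim => [|n IH] a' Hn HR; (case: (classic (Excl a')) => hE; first by exists a');
  have [q [HR' lt]] := step_exists _ _ hE HR.
  by move: lt; rewrite leqn0 in Hn; rewrite (eqP Hn).
by apply: (IH (step q a')) => //; lia.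
Qed.

Definition Mrun (w : nat -> Sigma) n := foldl rg (m0 Sigma Q g) (Defs.prefix Sigma w n).

Lemma Mrun_step w n : medge Sigma Q g (Mrun w n) (Mrun w n.+1).
Proof.
rewrite /Mrun /Defs.prefix /mkseq -addn1 iotaD map_cat /= cats1 foldl_rcons.
by apply/existsP; exists (w n).
Qed.

Lemma run_transfer a a' w :
  (forall p, gcycle Sigma Q g p -> acc (ag a) (fun m => m \in p) ->
      acc (ag a') (fun m => m \in p)) ->
  accepting_run Q a (fun n => strat Sigma Q g (Defs.prefix Sigma w n)) ->
  accepting_run Q a' (fun n => strat Sigma Q g (Defs.prefix Sigma w n)).
Proof.
move=> R2; rewrite /accepting_run.
have [x [s [hp hs hl Hm]]] := inf_cycle _ _ (Mrun_step w).
have gp : gcycle Sigma Q g (x :: s) by [].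
have e : forall q, inf_set (fun n => strat Sigma Q g (Defs.prefix Sigma w n)) q <->
    img (fun m => m \in x :: s) q.
  move=> q; rewrite /strat; split.
    move=> /(inf_img _ tg (Mrun w) q) [m [hm <-]]; exists m; split => //; exact/Hm.
  move=> [m [hm <-]]; exact: (proj2 (inf_img _ tg (Mrun w) _) (ex_intro _ m (conj (proj1 (Hm m) hm) erefl))).
move=> H; apply: acc_ext (fun q => iff_sym (e q)) _.
apply/acc_img; apply: R2 => //; apply/acc_img; exact: acc_ext e H.
Qed.

End Auto.

Theorem lemma5 (Sigma Q : finType) (Q0 : {set Q}) (delta : Q -> Sigma -> {set Q})
  (alpha : seq ({set Q} * {set Q})) :
  tight Q0 delta alpha ->
  exists alpha' : seq ({set Q} * {set Q}),
    (forall w, accepts Q0 delta alpha' w <-> accepts Q0 delta alpha w) /\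
    strongly_tight Q0 delta alpha'.
Proof.
move=> [g [Hgfg [Hused Hnr]]].
have [a' [[R1 R2] Hex]] := @exist_excl Sigma Q g alpha _ alpha (leqnn #|goods alpha|)
   (conj (fun S H => H) (fun p _ H => H) : RR Sigma Q g alpha alpha).
have eqv : forall w, accepts Q0 delta a' w <-> accepts Q0 delta alpha w.
  move=> w; split.
    by case=> r [hr hacc]; exists r; split => //; apply: R1.
  move=> H; have [hr hacc] := Hgfg w.
  exists (fun n => strat Sigma Q g (Defs.prefix Sigma w n)); split => //.
  exact: run_transfer R2 (hacc H).
exists a'; split => //.
exists g; split => //; split; [|split] => //.
  move=> w; have [hr hacc] := Hgfg w; split => // H.
  exact: run_transfer R2 (hacc (proj1 (eqv w) H)).
move=> m m' He Hne [Hne' [He' Hrep]].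
apply: (Hnr m m' He Hne); split => //; split => //.
case: Hrep => [h|h]; [by left | right => X HX Hne2].
by apply/acc_img; apply: R1; apply/acc_img; apply: h.
Qed.
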